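(* Let $w_0,w_1,p,q$ be integers with $p\equiv 2\pmod 4$, $q\equiv 3\pmod 4$ and $w_0+w_1$ odd, and let $(w_n)_{n\ge0}$ be defined by $w_{n+2}=pw_{n+1}+qw_n$ for all $n\ge0$. Then for all integers $n\ge0$ and $k\ge1$, $$w_{n+2^k}\equiv w_n+2^k\pmod{2^{k+1}}.$$ *)

(* Defs.v *)
From Stdlib Require Import ZArith.

(* Main.v *)
Require Import Defs.
From Stdlib Require Import ZArith Lia.
Open Scope Z_scope.

Definition Rec (p q : Z) (w : nat -> Z) := forall n : nat, w (n + 2)%nat = p * w (n + 1)%nat + q * w n.

Lemma par (p q a b : Z) (w : nat -> Z) (hp : p = 4*a+2) (hq : q = 4*b+3)
  (hrec : Rec p q w) (h0 : exists t, w 0%nat + w 1%nat = 2*t+1) :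
  forall n, exists t, w n + w (S n) = 2*t+1.
Proof.
  induction n as [|n IH]; [exact h0|].
  destruct IH as [t Ht].
  exists (3*t+1+2*(a*w (S n) + b * w n)).
  pose proof (hrec n) as H. replace (n+2)%nat with (S (S n)) in H by lia.
  replace (n+1)%nat with (S n) in H by lia.
  rewrite H, hp, hq. rewrite hp, hq in H. nia.
Qed.

Lemma mod4 (p q a b : Z) (f : nat -> Z) (hp : p = 4*a+2) (hq : q = 4*b+3)
  (hrec : Rec p q f) (hodd : forall n, exists t, f n = 2*t+1) :
  forall m n, exists t, f (n + 2*m)%nat = f n + 4*t.
Proof.
  assert (step : forall j, exists s, f (j+2)%nat = f j + 4*s).
  { intro j. destruct (hodd j) as [d Hd]. destruct (hodd (j+1)%nat) as [c Hc].
    exists (2*a*c+a+c+2*b*d+b+d+1). rewrite hrec, Hc, Hd, hp, hq. ring. }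
  induction m as [|m IH]; intro n.
  - exists 0. replace (n + 2*0)%nat with n by lia. ring.
  - destruct (IH n) as [t Ht]. destruct (step (n + 2*m)%nat) as [s Hs].
    exists (t+s). replace (n + 2 * S m)%nat with (n + 2*m + 2)%nat by lia.
    rewrite Hs, Ht. ring.
Qed.

Lemma key (p q a b : Z) (hp : p = 4*a+2) (hq : q = 4*b+3) :
  forall k : nat, (1 <= k)%nat -> forall w, Rec p q w ->
  (forall n, exists t, w n + w (S n) = 2*t+1) ->
  forall n, exists e, w (n + 2^k)%nat - w n = 2^(Z.of_nat k) * (2*e+1).
Proof.
  induction k as [|k IH]; intros Hk w hrec hpar n; [lia|].
  destruct (Nat.eq_dec k 0) as [->|Hk0].
  - destruct (hpar n) as [t Ht]. exists (t + a * w (S n) + b * w n).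
    change (2^1)%nat with 2%nat. rewrite hrec. simpl (2 ^ Z.of_nat 1).
    replace (n+1)%nat with (S n) by lia. rewrite hp, hq. nia.
  - assert (Hk1 : (1 <= k)%nat) by lia.
    specialize (IH Hk1).
    set (c := 2 ^ Z.of_nat k).
    assert (Hc : c <> 0) by (unfold c; apply Z.pow_nonzero; lia).
    set (E := fun n => (w (n + 2^k)%nat - w n) / c).
    assert (HE : forall n, w (n + 2^k)%nat - w n = c * E n /\ exists e, E n = 2*e+1).
    { intro m. destruct (IH w hrec hpar m) as [e He]. fold c in He.
      unfold E. rewrite He. rewrite Z.mul_comm, Z.div_mul by exact Hc.
      split; [ring | exists e; reflexivity]. }
    assert (HrE : Rec p q E).
    { intro m. apply (Z.mul_reg_l _ _ c Hc).
      rewrite <- (proj1 (HE (m+2)%nat)).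
      replace (c * (p * E (m + 1)%nat + q * E m)) with
        (p * (c * E (m+1)%nat) + q * (c * E m)) by ring.
      rewrite <- (proj1 (HE (m+1)%nat)), <- (proj1 (HE m)).
      replace (m + 2 + 2^k)%nat with (m + 2^k + 2)%nat by lia.
      replace (m + 1 + 2^k)%nat with (m + 2^k + 1)%nat by lia.
      rewrite !hrec. ring. }
    destruct (mod4 p q a b E hp hq HrE (fun m => proj2 (HE m)) (2^(k-1)) n) as [t Ht].
    replace (n + 2 * 2^(k-1))%nat with (n + 2^k)%nat in Ht
      by (replace k with (S (k-1)) at 1 by lia; rewrite Nat.pow_succ_r'; lia).
    destruct (HE n) as [Hd [e He]].
    pose proof (proj1 (HE (n + 2^k)%nat)) as Hd2.
    exists (e + t).
    replace (n + 2^(S k))%nat with (n + 2^k + 2^k)%nat by (rewrite Nat.pow_succ_r'; lia).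
    rewrite Nat2Z.inj_succ, Z.pow_succ_r by lia. fold c.
    replace (w (n + 2 ^ k + 2 ^ k)%nat - w n) with
      ((w (n + 2 ^ k + 2 ^ k)%nat - w (n + 2^k)%nat) + (w (n + 2^k)%nat - w n)) by ring.
    rewrite Hd2, Hd, Ht, He. ring.
Qed.

Theorem mainTheorem9 (p q : Z) (w : nat -> Z)
  (hp : p mod 4 = 2) (hq : q mod 4 = 3)
  (hw : Z.odd (w 0%nat + w 1%nat) = true)
  (hrec : forall n : nat, w (n + 2)%nat = p * w (n + 1)%nat + q * w n) :
  forall (n k : nat), (1 <= k)%nat ->
    (w (n + 2 ^ k)%nat - (w n + 2 ^ Z.of_nat k)) mod (2 ^ (Z.of_nat k + 1)) = 0.
Proof.
  intros n k Hk.
  pose proof (Z.div_mod p 4 ltac:(lia)) as Ep. rewrite hp in Ep.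
  pose proof (Z.div_mod q 4 ltac:(lia)) as Eq. rewrite hq in Eq.
  assert (h0 : exists t, w 0%nat + w 1%nat = 2*t+1).
  { apply Z.odd_spec in hw. destruct hw as [t Ht]. exists t. exact Ht. }
  destruct (key p q (p/4) (q/4) ltac:(lia) ltac:(lia) k Hk w hrec
    (par p q (p/4) (q/4) w ltac:(lia) ltac:(lia) hrec h0) n) as [e He].
  replace (w (n + 2 ^ k)%nat - (w n + 2 ^ Z.of_nat k)) with (e * 2 ^ (Z.of_nat k + 1)).
  - apply Z.mod_mul. apply Z.pow_nonzero; lia.
  - rewrite Z.pow_add_r by lia. lia.
Qed.
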